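(* Let $\Sigma$ be a signature and consider derivations in $\mathcal{J}(\Sigma)$. Suppose $\vdash_{\bar m}\bar s:\Theta\to\Gamma$. (a) If $\vdash_k B$ type $(\Gamma)$, then $\vdash_{k+\max(\bar m)} B[\bar s/\Gamma]$ type $(\Theta)$. (b) If $\vdash_k b:B\ (\Gamma)$, then $\vdash_{k+\max(\bar m)} b[\bar s/\Gamma]:B[\bar s/\Gamma]\ (\Theta)$.
   Context: Fix an infinite set $V$ of variables with decidable equality, and a fresh variable provider: functions $\varphi,\mathsf{fr}$ assigning to each finite $X\subseteq V$ an inhabited subset $\varphi(X)\subseteq V\setminus X$ and an element $\mathsf{fr}(X)\in\varphi(X)$. Fix disjoint sets $F$ (function symbols) and $T$ (type symbols) with decidable equality. Preelements are terms built from variables and symbols of $F$; a pretype is $S(t_1,\ldots,t_n)$ with $S\in T$ and $t_i$ preelements. $\mathrm{V}(E)$ is the set of variables of an expression $E$, $\equiv$ is syntactic identity, and $E[\bar a/\bar x]$ is simultaneous substitution. A precontext is a sequence $\Gamma=x_1:A_1,\ldots,x_n:A_n$ of pretypes with $x_k\in\varphi(\{x_1,\ldots,x_{k-1}\})$ and $\mathrm{V}(A_k)\subseteq\{x_1,\ldots,x_{k-1}\}$; $\mathrm{OV}(\Gamma)=x_1,\ldots,x_n$, $\mathrm{V}(\Gamma)=\{x_1,\ldots,x_n\}$, $\mathrm{Fresh}(\Gamma)=\varphi(\mathrm{V}(\Gamma))$, $\mathrm{fresh}(\Gamma)=\mathsf{fr}(\mathrm{V}(\Gamma))$, $E[\bar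 a/\Gamma]=E[\bar a/x_1,\ldots,x_n]$. Top variables: $\mathrm{TV}(\langle\rangle)=\emptyset$, $\mathrm{TV}(\Gamma,x:A)=(\mathrm{TV}(\Gamma)\setminus\mathrm{V}(A))\cup\{x\}$. A determining sequence for $\Gamma$ is a strictly increasing $\bar i=i_1,\ldots,i_k$ in $\{1,\ldots,n\}$ with $\mathrm{TV}(\Gamma)\subseteq\{x_{i_1},\ldots,x_{i_k}\}$; for $\bar a=a_1,\ldots,a_n$ put $\bar a_{\bar i}=a_{i_1},\ldots,a_{i_k}$. A type predeclaration is $(\Gamma,S,\bar i)$ with $S\in T$, $\bar i$ determining; a function predeclaration is $(\Gamma,f,\bar i,U)$ with $f\in F$, $\bar i$ determining, $U$ a pretype with $\mathrm{V}(U)\subseteq\mathrm{V}(\Gamma)$. A presignature is a set $\Sigma$ of predeclarations with no symbol declared twice. Judgements are ''$\Gamma$ context'', ''$A$ type $(\Gamma)$'', ''$a:A\ (\Gamma)$''. $\mathcal{J}(\Sigma)$ is the smallest set of judgements closed under: (R1) $\langle\rangle$ context; (R2) from $\Gamma$ context and $A$ type $(\Gamma)$ infer $\Gamma,x:A$ context, for $x\in\mathrm{Fresh}(\Gamma)$; (R3) from $x_1:A_1,\ldots,x_n:A_n$ context infer $x_i:A_i\ (x_1:A_1,\ldots,x_n:A_n)$; (R4) if $(\Gamma,S,\bar i)\in\Sigma$ and $\bar a:\Delta\to\Gamma$, infer $S(\bar a_{\bar i})$ type $(\Delta)$; (R5) if $(\Gamma,f,\bar i,U)\in\Sigma$, $\bar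 a:\Delta\to\Gamma$ and $U[\bar a/\Gamma]$ type $(\Delta)$, infer $f(\bar a_{\bar i}):U[\bar a/\Gamma]\ (\Delta)$. Here, for $\Gamma=x_1:A_1,\ldots,x_n:A_n$, the context map ''$\bar a:\Delta\to\Gamma$'' abbreviates the $n+2$ judgements $\Delta$ context, $\Gamma$ context, and $a_k:A_k[a_1,\ldots,a_{k-1}/x_1,\ldots,x_{k-1}]\ (\Delta)$ for $k=1,\ldots,n$. $\Sigma$ is a signature if ($\Gamma$ context)$\in\mathcal{J}(\Sigma)$ whenever $(\Gamma,S,\bar i)\in\Sigma$, and ($U$ type $(\Gamma)$)$\in\mathcal{J}(\Sigma)$ whenever $(\Gamma,f,\bar i,U)\in\Sigma$. Heights: a derivation consisting of a single application of (R1) has height $0$; applying a rule to premisses derived with heights $h_1,\ldots,h_r$ gives height $1+\max_j h_j$. $\vdash_k\mathcal U$ means $\mathcal U$ has a derivation in $\mathcal{J}(\Sigma)$ of height at most $k$. For a context map $\bar a:\Delta\to\Gamma$ with $|\Gamma|=n$, $\vdash_{m_1,\ldots,m_{n+2}}\bar a:\Delta\to\Gamma$ means its $n+2$ constituent judgements (in the order listed above) have derivations of heights at most $m_1,\ldots,m_{n+2}$; $\max(\bar m)$ is the largest $m_j$. *)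

(* Defs.v *)
From Stdlib Require Import List Arith Sorting.Sorted.
Import ListNotations.
Set Implicit Arguments.

Section Syntax.
Variables (V F T : Type).
Variable eqV : forall x y : V, {x = y} + {x <> y}.

Inductive pre : Type :=
| Var : V -> pre
| App : F -> list pre -> pre.

Record pty : Type := PTy { ty_sym : T; ty_args : list pre }.

(* precontexts x1:A1,...,xn:An, listed left to right *)
Definition ctx := list (V * pty).

Fixpoint vars_pre (t : pre) : list V :=
  match t with
  | Var x => [x]
  | App _ ts => flat_map vars_pre ts
  end.

Definition vars_ty (A : pty) : list V := flat_map vars_pre (ty_args A).

Definition ctx_vars (G : ctx) : list V := map fst G.

(* simultaneous substitution E[a1..an / x1..xn], given as list of (xi, ai) *)
Fixpoint lookup (sub : list (V * pre)) (y : V) : option pre :=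
  match sub with
  | [] => None
  | (x, t) :: sub' => if eqV x y then Some t else lookup sub' y
  end.

Fixpoint subst_pre (sub : list (V * pre)) (t : pre) : pre :=
  match t with
  | Var y => match lookup sub y with Some u => u | None => Var y end
  | App f ts => App f (map (subst_pre sub) ts)
  end.

Definition subst_ty (sub : list (V * pre)) (A : pty) : pty :=
  PTy (ty_sym A) (map (subst_pre sub) (ty_args A)).

Definition ctx_sub (G : ctx) (a : list pre) : list (V * pre) :=
  combine (ctx_vars G) a.

(* top variables: TV(<>) = {}, TV(G, x:A) = (TV(G) \ V(A)) u {x} *)
Definition TV (G : ctx) : V -> Prop :=
  fold_left (fun (P : V -> Prop) (p : V * pty) =>
               fun y => (P y /\ ~ In y (vars_ty (snd p))) \/ y = fst p)
            G (fun _ => False).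

(* Determining sequences; indices are 0-based (i in {0..n-1}
   corresponds to the paper's i+1 in {1..n}). *)
Definition determining (G : ctx) (ii : list nat) : Prop :=
  StronglySorted lt ii /\
  (forall i, In i ii -> i < length G) /\
  (forall y, TV G y -> exists i, In i ii /\ nth_error (ctx_vars G) i = Some y).

Definition select (ii : list nat) (a : list pre) : list pre :=
  flat_map (fun i => match nth_error a i with Some t => [t] | None => [] end) ii.

(* Fresh variable provider: finite subsets of V are represented by lists;
   phi and fr must depend only on the underlying set. *)
Definition fresh_provider (phi : list V -> V -> Prop) (fr : list V -> V) : Prop :=
  (forall X Y, (forall x, In x X <-> In x Y) -> forall x, phi X x <-> phi Y x) /\
  (forall X Y, (forall x, In x X <-> In x Y) -> fr X = fr Y) /\
  (forall X x, phi X x -> ~ In x X) /\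
  (forall X, phi X (fr X)).

Variable phi : list V -> V -> Prop.

Definition is_precontext (G : ctx) : Prop :=
  forall k x A, nth_error G k = Some (x, A) ->
    phi (ctx_vars (firstn k G)) x /\ incl (vars_ty A) (ctx_vars (firstn k G)).

Inductive decl : Type :=
| TDecl : ctx -> T -> list nat -> decl
| FDecl : ctx -> F -> list nat -> pty -> decl.

Definition decl_sym (d : decl) : T + F :=
  match d with
  | TDecl _ Sy _ => inl Sy
  | FDecl _ f _ _ => inr f
  end.

Definition well_formed_decl (d : decl) : Prop :=
  match d with
  | TDecl G _ ii => is_precontext G /\ determining G ii
  | FDecl G _ ii U => is_precontext G /\ determining G ii /\ incl (vars_ty U) (ctx_vars G)
  end.

Definition presignature (Sig : decl -> Prop) : Prop :=
  (forall d, Sig d -> well_formed_decl d) /\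
  (forall d1 d2, Sig d1 -> Sig d2 -> decl_sym d1 = decl_sym d2 -> d1 = d2).

Inductive judg : Type :=
| JCtx : ctx -> judg
| JType : ctx -> pty -> judg
| JElem : ctx -> pre -> pty -> judg.

Fixpoint cmap_elems (D : ctx) (acc : list (V * pre)) (G : ctx) (a : list pre)
  : list judg :=
  match G, a with
  | (x, A) :: G', t :: a' =>
      JElem D t (subst_ty acc A) :: cmap_elems D (acc ++ [(x, t)]) G' a'
  | _, _ => []
  end.

(* the n+2 judgements abbreviated by  a : Delta -> Gamma  (in order) *)
Definition cmap (D G : ctx) (a : list pre) : list judg :=
  JCtx D :: JCtx G :: cmap_elems D [] G a.

Variable Sig : decl -> Prop.

(* der J h : J has a derivation in J(Sig) of height exactly h *)
Inductive der : judg -> nat -> Prop :=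
| R1 : der (JCtx []) 0
| R2 : forall G A x h1 h2,
    der (JCtx G) h1 -> der (JType G A) h2 -> phi (ctx_vars G) x ->
    der (JCtx (G ++ [(x, A)])) (S (max h1 h2))
| R3 : forall G i x A h,
    der (JCtx G) h -> nth_error G i = Some (x, A) ->
    der (JElem G (Var x) A) (S h)
| R4 : forall G Sy ii D a hs,
    Sig (TDecl G Sy ii) -> length a = length G ->
    Forall2 der (cmap D G a) hs ->
    der (JType D (PTy Sy (select ii a))) (S (list_max hs))
| R5 : forall G f ii U D a hs h,
    Sig (FDecl G f ii U) -> length a = length G ->
    Forall2 der (cmap D G a) hs ->
    der (JType D (subst_ty (ctx_sub G a) U)) h ->
    der (JElem D (App f (select ii a)) (subst_ty (ctx_sub G a) U))
        (S (max (list_max hs) h)).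

Definition derivable (J : judg) : Prop := exists h, der J h.

(* |-_k J : J has a derivation of height at most k *)
Definition provable (k : nat) (J : judg) : Prop := exists h, h <= k /\ der J h.

Definition signature : Prop :=
  presignature Sig /\
  (forall G Sy ii, Sig (TDecl G Sy ii) -> derivable (JCtx G)) /\
  (forall G f ii U, Sig (FDecl G f ii U) -> derivable (JType G U)).

Definition cmap_provable (ms : list nat) (a : list pre) (D G : ctx) : Prop :=
  length a = length G /\ Forall2 (fun J m => provable m J) (cmap D G a) ms.

End Syntax.

(* Main.v *)
Require Import Defs.
From Stdlib Require Import List Arith Lia.
Import ListNotations.

Section Syn.
Variables (V F T : Type).
Variable eqV : forall x y : V, {x = y} + {x <> y}.

Fixpoint pre_ind' (P : pre V F -> Prop) (HV : forall x, P (Var F x))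
  (HA : forall f ts, Forall P ts -> P (App f ts)) (t : pre V F) : P t :=
  match t with
  | Var _ x => HV x
  | App f ts => HA f ts ((fix go (l : list (pre V F)) : Forall P l :=
       match l with [] => Forall_nil _ | u :: l' => Forall_cons _ (pre_ind' P HV HA u) (go l') end) ts)
  end.

Lemma subst_ext (s1 s2 : list (V * pre V F)) t :
  (forall y, In y (vars_pre t) -> lookup eqV s1 y = lookup eqV s2 y) ->
  subst_pre eqV s1 t = subst_pre eqV s2 t.
Proof.
  induction t as [x|f ts IH] using pre_ind'; intros H; simpl.
  - rewrite H; simpl; auto.
  - f_equal. apply map_ext_in. intros u Hu.
    rewrite Forall_forall in IH. apply IH; auto.
    intros y Hy; apply H; simpl; apply in_flat_map; eauto.
Qed.

Lemma subst_ty_ext (s1 s2 : list (V * pre V F)) (A : pty V F T) :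
  (forall y, In y (vars_ty A) -> lookup eqV s1 y = lookup eqV s2 y) ->
  subst_ty eqV s1 A = subst_ty eqV s2 A.
Proof.
  intros H; unfold subst_ty; f_equal. apply map_ext_in; intros u Hu.
  apply subst_ext; intros y Hy; apply H; unfold vars_ty; apply in_flat_map; eauto.
Qed.

Definition mapsub (sg : list (V * pre V F)) (s : list (V * pre V F)) :=
  map (fun p => (fst p, subst_pre eqV sg (snd p))) s.

Lemma lookup_mapsub sg s y :
  lookup eqV (mapsub sg s) y = option_map (subst_pre eqV sg) (lookup eqV s y).
Proof.
  induction s as [|[x u] s IH]; simpl; auto.
  destruct (eqV x y); auto.
Qed.

Lemma lookup_dom (s : list (V * pre V F)) y :
  In y (map fst s) -> exists u, lookup eqV s y = Some u.
Proof.
  induction s as [|[x u] s IH]; simpl; [tauto|].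
  intros H. destruct (eqV x y); eauto. destruct H; [congruence|auto].
Qed.

Lemma subst_comp sg s t :
  incl (vars_pre t) (map fst s) ->
  subst_pre eqV sg (subst_pre eqV s t) = subst_pre eqV (mapsub sg s) t.
Proof.
  induction t as [x|f ts IH] using pre_ind'; intros H; simpl.
  - rewrite lookup_mapsub. destruct (lookup_dom s x) as [u Hu].
    { apply H; simpl; auto. }
    rewrite Hu; reflexivity.
  - f_equal. rewrite map_map. apply map_ext_in. intros u Hu.
    rewrite Forall_forall in IH. apply IH; auto.
    intros y Hy; apply H; simpl; apply in_flat_map; eauto.
Qed.

Lemma subst_ty_comp sg s (A : pty V F T) :
  incl (vars_ty A) (map fst s) ->
  subst_ty eqV sg (subst_ty eqV s A) = subst_ty eqV (mapsub sg s) A.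
Proof.
  intros H; unfold subst_ty; simpl; f_equal. rewrite map_map. apply map_ext_in; intros u Hu.
  apply subst_comp; intros y Hy; apply H; unfold vars_ty; apply in_flat_map; eauto.
Qed.

Lemma lookup_app (l1 l2 : list (V * pre V F)) y :
  lookup eqV (l1 ++ l2) y = match lookup eqV l1 y with Some u => Some u | None => lookup eqV l2 y end.
Proof.
  induction l1 as [|[x u] l1 IH]; simpl; auto. destruct (eqV x y); auto.
Qed.

Lemma combine_map (l : list V) (a : list (pre V F)) sg :
  combine l (map (subst_pre eqV sg) a) = mapsub sg (combine l a).
Proof.
  revert a; induction l as [|v l IHl]; intros [|u a]; simpl; auto. f_equal; auto.
Qed.

Lemma map_fst_combine {A B : Type} (l : list A) (a : list B) :
  length l <= length a -> map fst (combine l a) = l.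
Proof.
  revert a; induction l as [|v l IHl]; intros [|u a]; simpl; intros; auto; try lia.
  f_equal; apply IHl; lia.
Qed.

Lemma select_map (f : pre V F -> pre V F) ii a :
  select ii (map f a) = map f (select ii a).
Proof.
  unfold select. induction ii as [|j ii IH]; simpl; auto. rewrite map_app, IH, nth_error_map.
  destruct (nth_error a j); simpl; auto.
Qed.

Lemma In_select ii (a : list (pre V F)) t : In t (select ii a) -> In t a.
Proof.
  unfold select; intros H. apply in_flat_map in H as [i [_ Hi]].
  destruct (nth_error a i) eqn:E; simpl in Hi; [|tauto].
  destruct Hi as [<-|[]]. eapply nth_error_In; eauto.
Qed.

Lemma lookup_combine_nth (vs : list V) (s : list (pre V F)) i x t :
  nth_error vs i = Some x -> nth_error s i = Some t -> ~ In x (firstn i vs) ->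
  lookup eqV (combine vs s) x = Some t.
Proof.
  revert s i; induction vs as [|v vs IH]; intros [|u s] [|i]; simpl; intros H1 H2 H3;
    try discriminate.
  - inversion H1; inversion H2; subst. destruct (eqV x x); congruence.
  - destruct (eqV v x); [subst; tauto|]. eapply IH; eauto.
Qed.

Lemma Forall2_In_l {A B : Type} (R : A -> B -> Prop) l1 l2 x :
  Forall2 R l1 l2 -> In x l1 -> exists y, In y l2 /\ R x y.
Proof.
  induction 1; simpl; [tauto|]. intros [<-|H']; eauto.
  destruct (IHForall2 H') as [z [? ?]]; eauto.
Qed.

Lemma In_le_list_max l x : In x l -> x <= list_max l.
Proof.
  intros H. pose proof (proj1 (list_max_le l (list_max l)) (le_n _)) as H2.
  rewrite Forall_forall in H2; auto.
Qed.

Lemma cmap_elems_in (D : ctx V F T) acc G a t :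
  length a = length G -> In t a -> exists B, In (JElem D t B) (cmap_elems eqV D acc G a).
Proof.
  revert acc a; induction G as [|[x A] G IH]; intros acc [|u a]; simpl; intros Hl Hin;
    try discriminate; try tauto.
  destruct Hin as [<-|Hin]; eauto.
  destruct (IH (acc ++ [(x, u)]) a) as [B HB]; auto; eauto.
Qed.

Lemma cmap_elems_nth (D : ctx V F T) acc G a i x A t :
  nth_error G i = Some (x, A) -> nth_error a i = Some t ->
  In (JElem D t (subst_ty eqV (acc ++ combine (firstn i (ctx_vars G)) (firstn i a)) A))
     (cmap_elems eqV D acc G a).
Proof.
  revert acc a i; induction G as [|[y B] G IH]; intros acc [|u a] [|i]; simpl; intros H1 H2;
    try discriminate.
  - inversion H1; inversion H2; subst. rewrite app_nil_r; auto.
  - right. specialize (IH (acc ++ [(y, u)]) a i H1 H2). rewrite <- app_assoc in IH. exact IH.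
Qed.

Lemma cmap_elems_map (Th Ga : ctx V F T) sg acc G a J' :
  (forall k x A, nth_error G k = Some (x, A) ->
     incl (vars_ty A) (map fst acc ++ ctx_vars (firstn k G))) ->
  In J' (cmap_elems eqV Th (mapsub sg acc) G (map (subst_pre eqV sg) a)) ->
  exists t B, In (JElem Ga t B) (cmap_elems eqV Ga acc G a) /\
    J' = JElem Th (subst_pre eqV sg t) (subst_ty eqV sg B).
Proof.
  revert acc a; induction G as [|[x A] G IH]; intros acc [|u a]; simpl; intros Hp Hin;
    try tauto.
  destruct Hin as [<-|Hin].
  - exists u, (subst_ty eqV acc A). split; auto. f_equal.
    rewrite subst_ty_comp; auto.
    specialize (Hp 0 x A eq_refl). simpl in Hp. rewrite app_nil_r in Hp. exact Hp.
  - assert (E : mapsub sg acc ++ [(x, subst_pre eqV sg u)] = mapsub sg (acc ++ [(x, u)])).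
    { unfold mapsub; rewrite map_app; reflexivity. }
    rewrite E in Hin.
    destruct (IH (acc ++ [(x, u)]) a) as [t [B [H1 H2]]]; auto.
    + intros k y C Hk. specialize (Hp (S k) y C Hk). simpl in Hp.
      rewrite map_app; simpl. rewrite <- app_assoc. exact Hp.
    + exists t, B; auto.
Qed.

Lemma Forall2_collect (P : judg V F T -> nat -> Prop) (L : list (judg V F T)) B :
  (forall J, In J L -> exists h, h <= B /\ P J h) ->
  exists hs, Forall2 P L hs /\ list_max hs <= B.
Proof.
  induction L as [|J L IH]; intros H.
  - exists []; simpl; split; auto; lia.
  - destruct (H J) as [h [Hh HP]]; simpl; auto.
    destruct IH as [hs [H1 H2]]. { intros J' HJ'; apply H; simpl; auto. }
    exists (h :: hs); simpl; split; auto. lia.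
Qed.
End Syn.

Section Jud.
Variables (V F T : Type).
Variable eqV : forall x y : V, {x = y} + {x <> y}.
Variable phi : list V -> V -> Prop.
Variable Sig : decl V F T -> Prop.
Hypothesis Hfresh : forall X x, phi X x -> ~ In x X.

Definition ok (J : judg V F T) : Prop :=
  match J with
  | JCtx G => is_precontext phi G
  | JType G A => incl (vars_ty A) (ctx_vars G)
  | JElem G t _ => incl (vars_pre t) (ctx_vars G)
  end.

Lemma incl_select_elems D G ii a hs (h : nat)
  (IH : forall m, m < h -> forall J, der eqV phi Sig J m -> ok J) :
  length a = length G -> Forall2 (der eqV phi Sig) (cmap eqV D G a) hs ->
  S (list_max hs) <= h ->
  incl (flat_map (@vars_pre V F) (select ii a)) (ctx_vars D).
Proof.
  intros Hl Hf Hh y Hy. apply in_flat_map in Hy as [t [Ht Hy]].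
  apply In_select in Ht.
  destruct (cmap_elems_in _ _ _ eqV D [] G a t Hl Ht) as [B HB].
  destruct (Forall2_In_l _ _ _ _ Hf (or_intror (or_intror HB))) as [m [Hm Hd]].
  apply In_le_list_max in Hm.
  exact (IH m ltac:(lia) _ Hd y Hy).
Qed.

Lemma der_ok : forall h J, der eqV phi Sig J h -> ok J.
Proof.
  intro h; induction h as [h IH] using lt_wf_ind. intros J Hd.
  revert IH; destruct Hd; intro IH; simpl.
  - intros k x A H; destruct k; discriminate.
  - pose proof (IH h1 ltac:(lia) _ Hd1) as HG. pose proof (IH h2 ltac:(lia) _ Hd2) as HA.
    simpl in HG, HA.
    intros k y B Hk. destruct (Nat.lt_ge_cases k (length G)) as [Hlt|Hge].
    + rewrite nth_error_app1 in Hk by auto.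
      rewrite firstn_app. replace (k - length G) with 0 by lia. simpl. rewrite app_nil_r.
      apply HG; auto.
    + rewrite nth_error_app2 in Hk by auto.
      destruct (k - length G) eqn:E; simpl in Hk; [|destruct n; discriminate].
      inversion Hk; subst.
      rewrite firstn_app. rewrite E. simpl. rewrite app_nil_r.
      replace k with (length G) by lia. rewrite firstn_all. auto.
  - intros y [<-|[]]. unfold ctx_vars. apply (in_map fst G (x, A)).
    eapply nth_error_In; eauto.
  - unfold vars_ty; simpl. eapply incl_select_elems; eauto.
  - eapply incl_select_elems; eauto. lia.
Qed.

Lemma provable_mono k k' J : provable eqV phi Sig k J -> k <= k' -> provable eqV phi Sig k' J.
Proof. intros [h [Hh Hd]] Hk; exists h; split; auto; lia. Qed.

Hypothesis Hwf : forall d, Sig d -> well_formed_decl phi d.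
Variables (Th Ga : ctx V F T) (s : list (pre V F)) (ms : list nat).
Hypothesis Hs : cmap_provable eqV phi Sig ms s Th Ga.

Let M := list_max ms.
Let sg := ctx_sub Ga s.

Lemma HsIn J : In J (cmap eqV Th Ga s) -> provable eqV phi Sig M J.
Proof.
  intros HJ. destruct Hs as [_ Hf].
  destruct (Forall2_In_l _ _ _ _ Hf HJ) as [m [Hm Hp]].
  eapply provable_mono; eauto. apply In_le_list_max; auto.
Qed.

Definition Q (J : judg V F T) (h : nat) : Prop :=
  match J with
  | JCtx _ => True
  | JType G B => G = Ga -> provable eqV phi Sig (h + M) (JType Th (subst_ty eqV sg B))
  | JElem G b B => G = Ga ->
      provable eqV phi Sig (h + M) (JElem Th (subst_pre eqV sg b) (subst_ty eqV sg B))
  end.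

Lemma cmap_new G a hs (h : nat)
  (IH : forall m, m < h -> forall J, der eqV phi Sig J m -> Q J m) :
  is_precontext phi G ->
  Forall2 (der eqV phi Sig) (cmap eqV Ga G a) hs ->
  S (list_max hs) <= h ->
  exists hs', Forall2 (der eqV phi Sig) (cmap eqV Th G (map (subst_pre eqV sg) a)) hs' /\
     list_max hs' <= list_max hs + M.
Proof.
  intros Hpre Hf Hh. apply Forall2_collect.
  intros J HJ. simpl in HJ. destruct HJ as [<-|[<-|HJ]].
  - destruct (HsIn (JCtx Th)) as [m [Hm Hd]]; [simpl; auto|].
    exists m; split; auto; lia.
  - destruct (Forall2_In_l _ _ _ _ Hf (or_intror (or_introl eq_refl))) as [m [Hm Hd]].
    apply In_le_list_max in Hm. exists m; split; auto; lia.
  - change (@nil (V * pre V F)) with (mapsub _ _ eqV sg []) in HJ.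
    destruct (cmap_elems_map _ _ _ eqV Th Ga sg [] G a J) as [t [B [HB ->]]]; auto.
    { intros k x A Hk; simpl. apply (proj2 (Hpre k x A Hk)). }
    destruct (Forall2_In_l _ _ _ _ Hf (or_intror (or_intror HB))) as [m [Hm Hd]].
    apply In_le_list_max in Hm.
    destruct (IH m ltac:(lia) _ Hd eq_refl) as [m' [Hm' Hd']].
    exists m'; split; auto; lia.
Qed.


Lemma main_Q : forall h J, der eqV phi Sig J h -> Q J h.
Proof.
  intro h; induction h as [h IH] using lt_wf_ind. intros J Hd.
  revert IH; destruct Hd; intro IH; simpl; auto.
  -
    intros ->.
    pose proof (der_ok _ _ Hd) as Hpre. simpl in Hpre.
    destruct (Hpre i x A H) as [Hphi Hincl].
    destruct Hs as [Hl _].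
    assert (Hi : i < length s).
    { rewrite Hl. apply nth_error_Some. congruence. }
    destruct (nth_error s i) as [t|] eqn:Et; [|apply nth_error_Some in Hi; congruence].
    assert (Hlk : lookup eqV sg x = Some t).
    { unfold sg, ctx_sub. eapply lookup_combine_nth; eauto.
      - unfold ctx_vars. apply (map_nth_error fst _ _ H).
      - unfold ctx_vars. rewrite firstn_map. apply Hfresh; auto. }
    cbn [subst_pre]. rewrite Hlk.
    pose proof (cmap_elems_nth _ _ _ eqV Th [] Ga s i x A t H Et) as HIn.
    simpl in HIn.
    assert (E : subst_ty eqV (combine (firstn i (ctx_vars Ga)) (firstn i s)) A = subst_ty eqV sg A).
    { apply subst_ty_ext. intros y Hy.
      unfold sg, ctx_sub.
      rewrite <- (firstn_skipn i (combine (ctx_vars Ga) s)).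
      rewrite combine_firstn, lookup_app.
      destruct (lookup_dom _ _ eqV (combine (firstn i (ctx_vars Ga)) (firstn i s)) y) as [u Hu].
      { rewrite map_fst_combine. unfold ctx_vars; rewrite firstn_map. apply Hincl; auto.
        rewrite !length_firstn. unfold ctx_vars. rewrite length_map. lia. }
      rewrite Hu; reflexivity. }
    rewrite E in HIn.
    eapply provable_mono. apply HsIn. simpl; auto. lia.
  -
    intros ->.
    destruct (Hwf _ H) as [Hpre _].
    destruct (cmap_new G a hs (S (list_max hs)) IH Hpre H1 (le_n _)) as [hs' [Hf' Hb]].
    unfold subst_ty; simpl. rewrite <- select_map.
    exists (S (list_max hs')). split; [lia|].
    apply R4 with (G := G); auto. rewrite length_map; auto.
  -
    intros ->.
    destruct (Hwf _ H) as [Hpre [_ HU]].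
    destruct (cmap_new G a hs (S (Nat.max (list_max hs) h)) IH Hpre H1 ltac:(lia)) as [hs' [Hf' Hb]].
    assert (E : subst_ty eqV sg (subst_ty eqV (ctx_sub G a) U) =
                subst_ty eqV (ctx_sub G (map (subst_pre eqV sg) a)) U).
    { rewrite subst_ty_comp.
      - unfold ctx_sub. rewrite combine_map. reflexivity.
      - unfold ctx_sub. rewrite map_fst_combine; auto. unfold ctx_vars; rewrite length_map; lia. }
    destruct (IH h ltac:(lia) _ Hd eq_refl) as [h' [Hh' Hd']].
    rewrite E in Hd'.
    cbn [subst_pre]. rewrite <- select_map. rewrite E.
    exists (S (Nat.max (list_max hs') h')). split; [lia|].
    apply R5 with (G := G); auto. rewrite length_map; auto.
Qed.

End Jud.

Theorem mainTheorem2 (V F T : Type)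
  (eqV : forall x y : V, {x = y} + {x <> y})
  (eqF : forall x y : F, {x = y} + {x <> y})
  (eqT : forall x y : T, {x = y} + {x <> y})
  (V_infinite : forall l : list V, exists x, ~ In x l)
  (phi : list V -> V -> Prop) (fr : list V -> V)
  (Hprov : fresh_provider phi fr)
  (Sig : decl V F T -> Prop) (HSig : signature eqV phi Sig)
  (Theta Gamma : ctx V F T) (s : list (pre V F)) (ms : list nat)
  (Hs : cmap_provable eqV phi Sig ms s Theta Gamma) :
  (forall k B,
      provable eqV phi Sig k (JType Gamma B) ->
      provable eqV phi Sig (k + list_max ms)
        (JType Theta (subst_ty eqV (ctx_sub Gamma s) B))) /\
  (forall k b B,
      provable eqV phi Sig k (JElem Gamma b B) ->
      provable eqV phi Sig (k + list_max ms)
        (JElem Theta (subst_pre eqV (ctx_sub Gamma s) b)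
                     (subst_ty eqV (ctx_sub Gamma s) B))).
Proof.
  destruct Hprov as [_ [_ [Hfr _]]].
  destruct HSig as [[Hwf _] _].
  split.
  - intros k B [h [Hh Hd]].
    pose proof (main_Q V F T eqV phi Sig Hfr Hwf Theta Gamma s ms Hs h _ Hd eq_refl) as HQ.
    eapply provable_mono; eauto. lia.
  - intros k b B [h [Hh Hd]].
    pose proof (main_Q V F T eqV phi Sig Hfr Hwf Theta Gamma s ms Hs h _ Hd eq_refl) as HQ.
    eapply provable_mono; eauto. lia.
Qed.
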